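(* Let $G$ be any connected graph on $n$ nodes, $K=K_n$ the complete graph on the same $n$ nodes, and $v\in\mathbb R^n$ any initial vector. Run the modified process (defined below) on $G$ and on $K$, both from $v$, and let $T_G(t)=\|v_G(t)-\bar v\|_1$, $T_K(t)=\|v_K(t)-\bar v\|_1$. Then $\mathbb E_v[T_K(t)]\le\mathbb E_v[T_G(t)]$ for all $t\ge0$.
   Context: Modified averaging process on a graph $H$ with vertex set $\{1,\dots,n\}$: the state vector $v_H(t)\in\mathbb R^n$ starts at $v_H(0)=v$; at each step an unordered pair $\{i,j\}$ of distinct vertices is chosen uniformly at random among all $\binom n2$ pairs (independently of previous steps); if $\{i,j\}$ is an edge of $H$, both $v_i$ and $v_j$ are replaced by $(v_i+v_j)/2$, otherwise the state is unchanged. $\bar v=(a,\dots,a)^T$ with $a=\frac1n\sum_i v_i$. Expectation is over the random sequence of chosen pairs. *)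

(* Defs.v *)
From mathcomp Require Import all_boot all_order all_algebra.
Set Implicit Arguments. Unset Strict Implicit. Unset Printing Implicit Defensive.
Import Order.TTheory GRing.Theory Num.Theory.
Local Open Scope ring_scope.

Definition simple_graph (n : nat) (e : rel 'I_n) : Prop :=
  symmetric e /\ irreflexive e.

Definition connected_graph (n : nat) (e : rel 'I_n) : Prop :=
  forall i j : 'I_n, connect e i j.

Definition complete_graph (n : nat) : rel 'I_n := fun i j => i != j.

Definition avg_step (R : realFieldType) (n : nat) (e : rel 'I_n) (i j : 'I_n)
  (v : {ffun 'I_n -> R}) : {ffun 'I_n -> R} :=
  if e i j then [ffun k => if (k == i) || (k == j) then (v i + v j) / 2 else v k]
  else v.

(* Expectation of f(v_H(t)) for the process started at v: at each step an
   unordered pair {i,j} (i < j) is chosen uniformly among the 'C(n,2) pairs,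
   independently.  Defined by conditioning on the first chosen pair. *)
Fixpoint proc_expect (R : realFieldType) (n : nat) (e : rel 'I_n)
  (f : {ffun 'I_n -> R} -> R) (t : nat) (v : {ffun 'I_n -> R}) : R :=
  match t with
  | 0 => f v
  | t'.+1 => ('C(n, 2))%:R^-1 *
      \sum_(i < n) \sum_(j < n | (i < j)%N) proc_expect e f t' (avg_step e i j v)
  end.

Definition mean (R : realFieldType) (n : nat) (v : {ffun 'I_n -> R}) : R :=
  (\sum_(k < n) v k) / n%:R.

Definition dist1_const (R : realFieldType) (n : nat) (a : R) (w : {ffun 'I_n -> R}) : R :=
  \sum_(k < n) `|w k - a|.

(* Main.v *)
Require Import Defs.
From mathcomp Require Import all_boot all_order all_algebra perm fingroup.
From mathcomp Require Import ring lra.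
Import Order.TTheory GRing.Theory Num.Theory.
Local Open Scope ring_scope.

Section S.
Variables (R : realFieldType) (n : nat).
Notation V := {ffun 'I_n -> R}.
Notation K := (@complete_graph n).

Definition P (e : rel 'I_n) (g : V -> R) (v : V) : R :=
  ('C(n, 2))%:R^-1 * \sum_(i < n) \sum_(j < n | (i < j)%N) g (avg_step e i j v).

Definition pact (s : {perm 'I_n}) (w : V) : V := [ffun k => w (s k)].
Definition mid (w u : V) : V := [ffun k => (w k + u k) / 2].

Definition good (g : V -> R) :=
  (forall s w, g (pact s w) = g w) /\ (forall w u, g (mid w u) <= (g w + g u) / 2).

Lemma step_pact s i j w :
  avg_step K i j (pact s w) = pact s (avg_step K (s i) (s j) w).
Proof.
rewrite /avg_step /complete_graph (inj_eq perm_inj).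
case: (i != j); last by [].
apply/ffunP => k; rewrite !ffunE !(inj_eq perm_inj).
by case: ifP => _; rewrite ?ffunE.
Qed.

Lemma step_mid e i j w u :
  avg_step e i j (mid w u) = mid (avg_step e i j w) (avg_step e i j u).
Proof.
rewrite /avg_step; case: (e i j); last by [].
apply/ffunP => k; rewrite !ffunE; case: ifP => _; rewrite ?ffunE //.
(field; rewrite ?pnatr_eq0 //).
Qed.

Lemma step_tperm i j w : i != j ->
  avg_step K i j w = mid w (pact (tperm i j) w).
Proof.
move=> ij; rewrite /avg_step /complete_graph ij.
apply/ffunP => k; rewrite !ffunE.
case: eqP => [->|/eqP ki] /=; first by rewrite tpermL.
case: eqP => [->|/eqP kj] /=; first by rewrite tpermR addrC.
rewrite tpermD 1?eq_sym //; (field; rewrite ?pnatr_eq0 //).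
Qed.

Lemma good_dec g i j w : good g -> i != j -> g (avg_step K i j w) <= g w.
Proof.
move=> [gs gm] ij; rewrite step_tperm //.
apply: le_trans (gm _ _) _; rewrite gs; lra.
Qed.

Lemma pair_sum (F : 'I_n -> 'I_n -> R) : (forall i j, F i j = F j i) ->
  \sum_(i < n) \sum_(j < n) F i j =
  (\sum_(i < n) \sum_(j < n | (i < j)%N) F i j) *+ 2 + \sum_(i < n) F i i.
Proof.
move=> Fs.
have E : forall i, \sum_(j < n) F i j =
   \sum_(j < n | (i < j)%N) F i j + \sum_(j < n | (j < i)%N) F i j + F i i.
  move=> i; rewrite (bigID (fun j : 'I_n => (i < j)%N)) /= -addrA; congr (_ + _).
  rewrite (bigD1 i) /= ?ltnn // addrC; congr (_ + _).
  apply: eq_bigl => j; rewrite -(inj_eq val_inj) /=; case: (ltngtP i j) => //= ->; by rewrite eqxx.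
rewrite (eq_bigr _ (fun i _ => E i)) !big_split /= mulr2n; congr (_ + _ + _).
under eq_bigr => i _ do rewrite big_mkcond.
under [in RHS]eq_bigr => i _ do rewrite big_mkcond.
rewrite exchange_big /=; apply: eq_bigr => i _; apply: eq_bigr => j _; by rewrite Fs.
Qed.

Lemma P_sym g s w : good g -> P K g (pact s w) = P K g w.
Proof.
move=> [gs _]; rewrite /P; congr (_ * _).
set F := fun i j => g (avg_step K i j w).
have Fs : forall i j, F i j = F j i.
  move=> i j; rewrite /F /avg_step /complete_graph eq_sym; case: (j != i) => //.
  by congr g; apply/ffunP => k; rewrite !ffunE orbC addrC.
have H1 := @pair_sum F Fs.
have Fs' : forall i j, F (s i) (s j) = F (s j) (s i) by move=> i j; apply: Fs.
have H2 := @pair_sum (fun i j => F (s i) (s j)) Fs'.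
have X : \sum_(i < n) \sum_(j < n | (i < j)%N) g (avg_step K i j (pact s w)) =
         \sum_(i < n) \sum_(j < n | (i < j)%N) F (s i) (s j).
  by apply: eq_bigr => i _; apply: eq_bigr => j _; rewrite step_pact gs.
rewrite X.
have D : \sum_(i < n) \sum_(j < n) F (s i) (s j) = \sum_(i < n) \sum_(j < n) F i j.
  rewrite [RHS](reindex_inj (@perm_inj _ s)) /=; apply: eq_bigr => i _.
  by rewrite [RHS](reindex_inj (@perm_inj _ s)).
have Dd : \sum_(i < n) F (s i) (s i) = \sum_(i < n) F i i.
  by rewrite [RHS](reindex_inj (@perm_inj _ s)).
move: D; rewrite H1 H2 Dd => /addIr /eqP; rewrite -mulr_natr.
rewrite -[in X in _ == X]mulr_natr (inj_eq (mulIf _)) ?pnatr_eq0 // => /eqP.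
done.
Qed.

Lemma P_mid e g w u : good g -> P e g (mid w u) <= (P e g w + P e g u) / 2.
Proof.
move=> [_ gm]; rewrite /P -mulrDr -mulrA ler_wpM2l ?invr_ge0 ?ler0n //.
rewrite -big_split mulr_suml; apply: ler_sum => i _.
rewrite -big_split mulr_suml; apply: ler_sum => j _.
by rewrite step_mid.
Qed.

Lemma good_P {g} : good g -> good (P K g).
Proof.
move=> gg; split; first by move=> s w; apply: P_sym.
by move=> w u; apply: P_mid.
Qed.

Lemma P_mono e g h w : (forall x, g x <= h x) -> P e g w <= P e h w.
Proof.
move=> gh; rewrite /P ler_wpM2l ?invr_ge0 ?ler0n //.
by apply: ler_sum => i _; apply: ler_sum => j _.
Qed.

Lemma P_KG (G : rel 'I_n) {g} w : good g -> P K g w <= P G g w.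
Proof.
move=> gg; rewrite /P ler_wpM2l ?invr_ge0 ?ler0n //.
apply: ler_sum => i _; apply: ler_sum => j ij.
have nij : i != j by rewrite -(inj_eq val_inj) /= neq_ltn ij.
case Gij: (G i j); last first.
  by rewrite {2}/avg_step Gij; apply: good_dec.
by rewrite /avg_step Gij /complete_graph nij.
Qed.

Lemma main (G : rel 'I_n) t h : good h ->
  good (proc_expect K h t) /\ forall w, proc_expect K h t w <= proc_expect G h t w.
Proof.
move=> gh; elim: t => [|t [gt IH]]; first by split.
have E : forall e, proc_expect e h t.+1 = P e (proc_expect e h t) by [].
rewrite !E.
split; first exact: (good_P gt).
move=> w; apply: le_trans (P_KG G w gt) _.
exact: P_mono.
Qed.

Lemma good_dist a : good (dist1_const a).
Proof.
split.
  move=> s w; rewrite /dist1_const [RHS](reindex_inj (@perm_inj _ s)) /=.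
  by apply: eq_bigr => k _; rewrite ffunE.
move=> w u; rewrite /dist1_const -big_split mulr_suml /=; apply: ler_sum => k _.
rewrite ffunE.
have -> : (w k + u k) / 2 - a = ((w k - a) + (u k - a)) / 2 by (field; rewrite ?pnatr_eq0 //).
rewrite normrM (@ger0_norm _ 2^-1) ?invr_ge0 ?ler0n // ler_wpM2r ?invr_ge0 ?ler0n //.
exact: ler_normD.
Qed.
End S.

Theorem theorem9 (R : realFieldType) (n : nat) (G : rel 'I_n)
  (v : {ffun 'I_n -> R}) :
  (1 < n)%N -> simple_graph G -> connected_graph G ->
  forall t : nat,
    proc_expect (@complete_graph n) (dist1_const (mean v)) t v
    <= proc_expect G (dist1_const (mean v)) t v.
Proof.
move=> _ _ _ t.
by have [_ ->] := @main R n G t _ (@good_dist R n (mean v)).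
Qed.
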